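(* Let $\Lambda$ be a row-finite, source-free, strongly connected $k$-graph and let $x,y\in\Lambda^\infty$ be such that $\sigma^m(x)=\sigma^n(y)$ for some $m,n\in\mathbb N^k$. Then the representations $\pi_x$ on $\mathcal H_x$ and $\pi_y$ on $\mathcal H_y$ (described in the context) are unitarily equivalent.
   Context: $k$-graph: countable small category $\Lambda$ with degree functor $d:\Lambda\to\mathbb N^k$ with unique factorization; $r,s$ range/source, $\Lambda v=\{\lambda:s(\lambda)=v\}$; row-finite, source-free and strongly connected ($v\Lambda w\ne\emptyset$ for all vertices) as usual. Infinite paths $x:\Omega_k\to\Lambda$ (degree-preserving functors from the $k$-graph $\Omega_k$ of pairs $(p,q)$, $p\le q$ in $\mathbb N^k$), shift $\sigma^m(x)(p,q)=x(p+m,q+m)$. Construction: for $x\in\Lambda^\infty$ write $\mathbf 1=(1,\dots,1)$, $x_i=x((i-1)\mathbf 1,i\mathbf 1)$, $v_i=r(x_i)$, $F_i=\Lambda v_i$; $\mathcal H_x=\varinjlim(\ell^2(F_i),\rho_i)$ with $\rho_i(\xi^i_\lambda)=\xi^{i+1}_{\lambda x_i}$, i.e. for $i\le j$ the basis vectors $\xi^i_\lambda$ and $\xi^j_\mu$ are identified iff $\mu=\lambda x_i\cdots x_{j-1}$, with classes $[\xi^i_\lambda]$. $\pi_x$ is the representation of $C^*(\Lambda)$ on $\mathcal H_x$ given by $\pi_x(t_\lambda)[\xi^i_\mu]=[\xi^i_{\lambda\mu}]$ if $s(\lambda)=r(\mu)$ and $0$ otherwise, where $\{t_\lambda\}$ are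 the Cuntz–Krieger generators of $C^*(\Lambda)$. *)

(* Defs.v *)
From Stdlib Require Import Reals List ClassicalEpsilon.
From Stdlib Require Fin.

Set Implicit Arguments.

Definition Nk (k : nat) := Fin.t k -> nat.
Definition nk_add {k} (m n : Nk k) : Nk k := fun i => (m i + n i)%nat.
Definition nk_sub {k} (m n : Nk k) : Nk k := fun i => (m i - n i)%nat.
Definition nk_le {k} (m n : Nk k) : Prop := forall i, (m i <= n i)%nat.
Definition nk_zero {k} : Nk k := fun _ => 0%nat.
Definition nk_diag {k} (c : nat) : Nk k := fun _ => c.

(* ---------- k-graphs ----------
   A countable small category (objects Obj, morphisms Mor, composition
   comp l m = "l m" defined when src l = rng m) with a degree functor
   deg : Mor -> N^k having the unique factorisation property. *)
Record kgraph (k : nat) := KGraph {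
  Obj : Type;
  Mor : Type;
  rng : Mor -> Obj;
  src : Mor -> Obj;
  idm : Obj -> Mor;
  comp : Mor -> Mor -> Mor;
  deg : Mor -> Nk k;
  rng_idm : forall v, rng (idm v) = v;
  src_idm : forall v, src (idm v) = v;
  rng_comp : forall l m, src l = rng m -> rng (comp l m) = rng l;
  src_comp : forall l m, src l = rng m -> src (comp l m) = src m;
  comp_idl : forall l, comp (idm (rng l)) l = l;
  comp_idr : forall l, comp l (idm (src l)) = l;
  comp_assoc : forall l m n, src l = rng m -> src m = rng n ->
      comp (comp l m) n = comp l (comp m n);
  deg_idm : forall v, deg (idm v) = nk_zero;
  deg_comp : forall l m, src l = rng m -> deg (comp l m) = nk_add (deg l) (deg m);
  unique_factorisation : forall l (m n : Nk k), deg l = nk_add m n ->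
      exists mu nu, src mu = rng nu /\ comp mu nu = l /\ deg mu = m /\ deg nu = n /\
        (forall mu' nu', src mu' = rng nu' -> comp mu' nu' = l ->
           deg mu' = m -> deg nu' = n -> mu' = mu /\ nu' = nu);
  mor_countable : exists f : Mor -> nat, forall a b, f a = f b -> a = b
}.

Arguments Obj {k} _.
Arguments Mor {k} _.
Arguments rng {k L} _ : rename.
Arguments src {k L} _ : rename.
Arguments idm {k L} _ : rename.
Arguments comp {k L} _ _ : rename.
Arguments deg {k L} _ : rename.

Section KG.
Context {k : nat} (L : kgraph k).

Definition row_finite : Prop :=
  forall (v : Obj L) (n : Nk k), exists l : list (Mor L),
    forall lam : Mor L, rng lam = v -> deg lam = n -> In lam l.

Definition source_free : Prop :=
  forall (v : Obj L) (n : Nk k), exists lam : Mor L, rng lam = v /\ deg lam = n.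

Definition strongly_connected : Prop :=
  forall v w : Obj L, exists lam : Mor L, rng lam = v /\ src lam = w.

(* Infinite paths: degree-preserving functors Omega_k -> Lambda, where
   Omega_k has morphisms (p,q), p <= q, (p,q)(q,r) = (p,r), d(p,q) = q - p.
   Only the values on pairs p <= q are meaningful. *)
Definition ipath := Nk k -> Nk k -> Mor L.

Record is_inf_path (x : ipath) : Prop := {
  ip_deg : forall p q, nk_le p q -> deg (x p q) = nk_sub q p;
  ip_comp : forall p q r, nk_le p q -> nk_le q r ->
      src (x p q) = rng (x q r) /\ comp (x p q) (x q r) = x p r;
  ip_idm : forall p, x p p = idm (rng (x p p))
}.

Definition shift_eq (x y : ipath) (m n : Nk k) : Prop :=
  forall p q, nk_le p q -> x (nk_add p m) (nk_add q m) = y (nk_add p n) (nk_add q n).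

(* ---------- the direct-limit basis of H_x (levels indexed from 0) ----------
   x_i = x(i1,(i+1)1), v_i = r(x_i), F_i = Lambda v_i.
   A basis element xi^i_lam is a pair (i, lam) with s(lam) = v_i. *)
Definition seg (x : ipath) (i j : nat) : Mor L := x (nk_diag i) (nk_diag j).
Definition vtx (x : ipath) (i : nat) : Obj L := rng (seg x i (S i)).

Definition Bx (x : ipath) := { p : nat * Mor L | src (snd p) = vtx x (fst p) }.

Definition req (x : ipath) (a b : nat * Mor L) : Prop :=
  exists l, (fst a <= l)%nat /\ (fst b <= l)%nat /\
    comp (snd a) (seg x (fst a) l) = comp (snd b) (seg x (fst b) l).

Definition Bx_eq (x : ipath) (a b : Bx x) : Prop := req x (proj1_sig a) (proj1_sig b).

End KG.

Definition C := (R * R)%type.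
Definition C0 : C := (0%R, 0%R).
Definition Cadd (z w : C) : C := (fst z + fst w, snd z + snd w)%R.
Definition Cmul (z w : C) : C :=
  (fst z * fst w - snd z * snd w, fst z * snd w + snd z * fst w)%R.
Definition Cnorm2 (z : C) : R := (fst z * fst z + snd z * snd z)%R.

Section L2.
Context {D : Type} (E : D -> D -> Prop).

Definition respects (f : D -> C) : Prop := forall a b, E a b -> f a = f b.

Fixpoint classes_distinct (l : list D) : Prop :=
  match l with
  | nil => True
  | a :: t => (forall b, In b t -> ~ E a b) /\ classes_distinct t
  end.

Definition psum (f : D -> C) (l : list D) : R :=
  fold_right (fun a acc => (Cnorm2 (f a) + acc)%R) 0%R l.

Definition sqnorm_is (f : D -> C) (r : R) : Prop :=
  is_lub (fun t => exists l, classes_distinct l /\ t = psum f l) r.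

(* f is (a representative of) an element of l^2(D/E) *)
Definition in_l2 (f : D -> C) : Prop := respects f /\ exists r, sqnorm_is f r.

End L2.

Section Rep.
Context {k : nat} (L : kgraph k) (x : ipath L).

(* [xi^i_mu] is in the range of t_lam, namely equal to [xi^j_{lam nu}] *)
Definition in_range (lam : Mor L) (a b : Bx x) : Prop :=
  src lam = rng (snd (proj1_sig b)) /\
  req x (proj1_sig a) (fst (proj1_sig b), comp lam (snd (proj1_sig b))).

(* pi_x(t_lam) acting on coordinate functions f = sum_b f(b) [xi_b]:
   (pi_x(t_lam) f)(a) = f(b) if [a] = [lam b], and 0 otherwise. *)
Definition pi_t (lam : Mor L) (f : Bx x -> C) (a : Bx x) : C :=
  match excluded_middle_informative (exists b, in_range lam a b) with
  | left H => f (proj1_sig (constructive_indefinite_description _ H))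
  | right _ => C0
  end.

End Rep.

Definition unitarily_equivalent {k} (L : kgraph k) (x y : ipath L) : Prop :=
  exists U : (Bx x -> C) -> (Bx y -> C),
    (forall f, in_l2 (@Bx_eq k L x) f -> in_l2 (@Bx_eq k L y) (U f)) /\
    (forall (c : C) f g, in_l2 (@Bx_eq k L x) f -> in_l2 (@Bx_eq k L x) g ->
       forall d, U (fun b => Cadd (Cmul c (f b)) (g b)) d = Cadd (Cmul c (U f d)) (U g d)) /\
    (forall f r, in_l2 (@Bx_eq k L x) f -> sqnorm_is (@Bx_eq k L x) f r -> sqnorm_is (@Bx_eq k L y) (U f) r) /\
    (forall g, in_l2 (@Bx_eq k L y) g -> exists f, in_l2 (@Bx_eq k L x) f /\ forall d, U f d = g d) /\
    (forall lam f, in_l2 (@Bx_eq k L x) f ->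
       forall d, U (pi_t lam f) d = pi_t lam (U f) d).

(* Main.v *)
Require Import Defs.
From Stdlib Require Import Reals List ClassicalEpsilon.
From Stdlib Require Import Lia FunctionalExtensionality Arith.
Local Notation comp := Defs.comp (only parsing).

Lemma nk_ext {k} (a b : Nk k) : (forall i, a i = b i) -> a = b.
Proof. intro H; apply functional_extensionality; auto. Qed.

Lemma fin_bound : forall k (f : Fin.t k -> nat), exists N, forall i, f i <= N.
Proof.
  induction k; intro f.
  - exists 0. intro i. inversion i.
  - destruct (IHk (fun i => f (Fin.FS i))) as [N HN].
    exists (Nat.max N (f Fin.F1)). intro i.
    apply (Fin.caseS' i (fun i => f i <= Nat.max N (f Fin.F1))).
    + lia.
    + intro j; specialize (HN j); simpl in HN; lia.
Qed.

Definition Ez {k} {L : kgraph k} (z : ipath L) (a : nat * Mor L) (q : Nk k) : Mor L :=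
  comp (snd a) (z (nk_diag (fst a)) q).
Definition wf {k} {L : kgraph k} (z : ipath L) (a : nat * Mor L) : Prop :=
  src (snd a) = vtx z (fst a).
Definition lamp {k} {L : kgraph k} (lam : Mor L) (a : nat * Mor L) : nat * Mor L :=
  (fst a, comp lam (snd a)).

Lemma le_diag {k} i j : i <= j -> @nk_le k (nk_diag i) (nk_diag j).
Proof. intros H t; unfold nk_diag; lia. Qed.
Lemma nk_le_refl {k} (p : Nk k) : nk_le p p.
Proof. intro; lia. Qed.
Lemma nk_le_trans {k} (p q r : Nk k) : nk_le p q -> nk_le q r -> nk_le p r.
Proof. intros H1 H2 t; specialize (H1 t); specialize (H2 t); lia. Qed.

Section Path.
Context {k : nat} {L : kgraph k} (z : ipath L) (Hz : is_inf_path z).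

Lemma rng_V p q : nk_le p q -> rng (z p q) = rng (z p p).
Proof.
  intro H. destruct (ip_comp Hz (nk_le_refl p) H) as [H1 H2].
  transitivity (rng (comp (z p p) (z p q))). rewrite H2; reflexivity.
  apply rng_comp; exact H1.
Qed.

Lemma src_V p q : nk_le p q -> src (z p q) = rng (z q q).
Proof. intro H. exact (proj1 (ip_comp Hz H (nk_le_refl q))). Qed.

Lemma vtx_V i : vtx z i = rng (z (nk_diag i) (nk_diag i)).
Proof. unfold vtx, seg. apply rng_V, le_diag; lia. Qed.

Lemma E_src a q : wf z a -> nk_le (nk_diag (fst a)) q -> src (Ez z a q) = rng (z q q).
Proof.
  intros Hw Hq. unfold Ez. rewrite src_comp. apply src_V; auto.
  rewrite Hw, vtx_V. symmetry; apply rng_V; auto.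
Qed.

Lemma E_rng a q : wf z a -> nk_le (nk_diag (fst a)) q -> rng (Ez z a q) = rng (snd a).
Proof.
  intros Hw Hq. unfold Ez. apply rng_comp.
  rewrite Hw, vtx_V. symmetry; apply rng_V; auto.
Qed.

Lemma E_ext a q q' : wf z a -> nk_le (nk_diag (fst a)) q -> nk_le q q' ->
  Ez z a q' = comp (Ez z a q) (z q q').
Proof.
  intros Hw H1 H2. unfold Ez. destruct (ip_comp Hz H1 H2) as [A B].
  rewrite comp_assoc; auto.
  - rewrite B; auto.
  - rewrite Hw, vtx_V. symmetry; apply rng_V; auto.
Qed.

Lemma E_diag a : wf z a -> Ez z a (nk_diag (fst a)) = snd a.
Proof.
  intro Hw. unfold Ez. rewrite (ip_idm Hz). rewrite <- vtx_V, <- Hw. apply comp_idr.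
Qed.

Lemma E_lam a lam q : wf z a -> src lam = rng (snd a) -> nk_le (nk_diag (fst a)) q ->
  Ez z (lamp lam a) q = comp lam (Ez z a q).
Proof.
  intros Hw Hl Hq. unfold Ez, lamp; simpl. apply comp_assoc; auto.
  rewrite Hw, vtx_V. symmetry; apply rng_V; auto.
Qed.

Lemma wf_lam a lam : wf z a -> src lam = rng (snd a) -> wf z (lamp lam a).
Proof. intros Hw Hl. unfold wf, lamp; simpl. rewrite src_comp; auto. Qed.

Lemma req_E a b : wf z a -> wf z b ->
  (req z a b <-> exists q, nk_le (nk_diag (fst a)) q /\ nk_le (nk_diag (fst b)) q /\ Ez z a q = Ez z b q).
Proof.
  intros Ha Hb. split.
  - intros [l [H1 [H2 H3]]]. exists (nk_diag l). repeat split; try (apply le_diag; auto).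
    exact H3.
  - intros [q [H1 [H2 H3]]]. destruct (fin_bound _ q) as [N HN].
    exists (N + fst a + fst b). repeat split; try lia.
    assert (Hq : nk_le q (nk_diag (N + fst a + fst b))).
    { intro t; unfold nk_diag; specialize (HN t); lia. }
    change (Ez z a (nk_diag (N + fst a + fst b)) = Ez z b (nk_diag (N + fst a + fst b))).
    rewrite (E_ext a q), (E_ext b q); auto. rewrite H3; auto.
Qed.

Lemma E_eq_ext a b q q' : wf z a -> wf z b -> nk_le (nk_diag (fst a)) q ->
  nk_le (nk_diag (fst b)) q -> nk_le q q' -> Ez z a q = Ez z b q -> Ez z a q' = Ez z b q'.
Proof. intros; rewrite (E_ext a q), (E_ext b q); auto; congruence. Qed.

Lemma req_refl a : req z a a.
Proof. exists (fst a); repeat split; lia. Qed.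
Lemma req_sym a b : req z a b -> req z b a.
Proof. intros [l [H1 [H2 H3]]]; exists l; repeat split; auto. Qed.
Lemma req_trans a b c : wf z a -> wf z b -> wf z c -> req z a b -> req z b c -> req z a c.
Proof.
  intros Ha Hb Hc H1 H2.
  apply req_E in H1; auto. apply req_E in H2; auto. apply req_E; auto.
  destruct H1 as [q1 [A1 [B1 C1]]]. destruct H2 as [q2 [A2 [B2 C2]]].
  set (q := fun i => Nat.max (q1 i) (q2 i)).
  assert (L1 : nk_le q1 q) by (intro t; unfold q; lia).
  assert (L2 : nk_le q2 q) by (intro t; unfold q; lia).
  exists q. split; [eapply nk_le_trans; eauto|]. split; [eapply nk_le_trans; eauto|].
  rewrite (E_eq_ext a b q1 q), (E_eq_ext b c q2 q); auto.
Qed.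

Lemma req_cancel a b lam : wf z a -> wf z b -> src lam = rng (snd a) -> src lam = rng (snd b) ->
  req z (lamp lam a) (lamp lam b) -> req z a b.
Proof.
  intros Ha Hb La Lb H.
  apply req_E in H; try (apply wf_lam; auto). apply req_E; auto.
  destruct H as [q [A1 [A2 A3]]]. exists q. split; auto. split; auto.
  simpl in A1, A2.
  rewrite (E_lam a), (E_lam b) in A3; auto.
  assert (Da : src lam = rng (Ez z a q)) by (rewrite E_rng; auto).
  assert (Db : src lam = rng (Ez z b q)) by (rewrite E_rng; auto).
  assert (Hd : deg (Ez z a q) = deg (Ez z b q)).
  { apply nk_ext; intro t.
    assert (X := f_equal (fun l => deg l t) A3). simpl in X.
    rewrite (deg_comp _ _ _ Da), (deg_comp _ _ _ Db) in X. unfold nk_add in X. lia. }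
  destruct (unique_factorisation _ _ (deg_comp _ _ _ Da)) as [mu [nu [_ [_ [_ [_ U]]]]]].
  destruct (U lam (Ez z a q) Da eq_refl eq_refl eq_refl) as [_ E1].
  destruct (U lam (Ez z b q) Db (eq_sym A3) eq_refl (eq_sym Hd)) as [_ E2].
  congruence.
Qed.

End Path.

Definition sh {k} (m n : Nk k) (q : Nk k) : Nk k := nk_add (nk_sub q n) m.

Definition psi0 {k} {L : kgraph k} (x y : ipath L) (m n : Nk k) (B : nat) (b : nat * Mor L)
  : nat * Mor L :=
  (fst b + 2 * B, comp (Ez y b (nk_diag (fst b + B)))
                       (x (sh m n (nk_diag (fst b + B))) (nk_diag (fst b + 2 * B)))).

Section Transfer.
Context {k : nat} {L : kgraph k} (x y : ipath L) (Hx : is_inf_path x) (Hy : is_inf_path y)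
  (m n : Nk k) (Hmn : shift_eq x y m n) (B : nat)
  (HBm : nk_le m (nk_diag B)) (HBn : nk_le n (nk_diag B)).

Lemma shift_xy p q : nk_le n p -> nk_le p q -> x (sh m n p) (sh m n q) = y p q.
Proof.
  intros H1 H2. unfold sh. rewrite Hmn.
  - f_equal; apply nk_ext; intro t; unfold nk_add, nk_sub; specialize (H1 t); specialize (H2 t); lia.
  - intro t; unfold nk_sub; specialize (H2 t); lia.
Qed.

Lemma psi_compat b : wf y b ->
  src (Ez y b (nk_diag (fst b + B))) = rng (x (sh m n (nk_diag (fst b + B))) (nk_diag (fst b + 2 * B))).
Proof.
  intro Hw. rewrite (E_src y Hy); auto.
  - rewrite (rng_V x Hx).
    + rewrite shift_xy; auto; try apply nk_le_refl.
      intro t; specialize (HBn t); unfold nk_diag in *; lia.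
    + intro t; specialize (HBm t); specialize (HBn t); unfold sh, nk_diag, nk_add, nk_sub in *; lia.
  - apply le_diag; lia.
Qed.

Lemma wf_psi b : wf y b -> wf x (psi0 x y m n B b).
Proof.
  intro Hw. unfold wf, psi0; simpl. rewrite src_comp by (apply psi_compat; auto).
  rewrite (vtx_V x Hx). apply (src_V x Hx).
  intro t; specialize (HBm t); specialize (HBn t); unfold sh, nk_diag, nk_add, nk_sub in *; lia.
Qed.

Lemma psi_rng b : wf y b -> rng (snd (psi0 x y m n B b)) = rng (snd b).
Proof.
  intro Hw. unfold psi0; simpl. rewrite rng_comp by (apply psi_compat; auto).
  apply (E_rng y Hy); auto. apply le_diag; lia.
Qed.

Lemma transfer b q : wf y b -> nk_le (nk_diag (fst b + 3 * B)) q ->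
  Ez x (psi0 x y m n B b) (sh m n q) = Ez y b q.
Proof.
  intros Hw Hq.
  set (Q := nk_diag (k:=k) (fst b + B)).
  set (D := nk_diag (k:=k) (fst b + 2 * B)).
  assert (L1 : nk_le (sh m n Q) D).
  { intro t; specialize (HBm t); specialize (HBn t); unfold Q, D, sh, nk_diag, nk_add, nk_sub in *; lia. }
  assert (L2 : nk_le D (sh m n q)).
  { intro t; specialize (HBm t); specialize (HBn t); specialize (Hq t);
    unfold D, sh, nk_diag, nk_add, nk_sub in *; lia. }
  assert (L3 : nk_le Q q).
  { intro t; specialize (Hq t); unfold Q, nk_diag in *; lia. }
  unfold Ez at 1, psi0; cbn [fst snd]. fold Q D.
  rewrite comp_assoc.
  - destruct (ip_comp Hx L1 L2) as [_ ->].
    assert (Ln : nk_le n Q) by (intro t; specialize (HBn t); unfold Q, nk_diag in *; lia).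
    rewrite (shift_xy Q q Ln L3).
    symmetry. apply (E_ext y Hy); auto. apply le_diag; lia.
  - apply psi_compat; auto.
  - exact (proj1 (ip_comp Hx L1 L2)).
Qed.

Lemma psi_resp a b : wf y a -> wf y b -> req y a b -> req x (psi0 x y m n B a) (psi0 x y m n B b).
Proof.
  intros Ha Hb H. apply (req_E y Hy) in H; auto.
  apply (req_E x Hx); try (apply wf_psi; auto).
  destruct H as [q [A1 [A2 A3]]].
  set (q' := fun i => Nat.max (q i) (Nat.max (fst a + 3 * B) (fst b + 3 * B))).
  assert (Lq : nk_le q q') by (intro t; unfold q'; lia).
  assert (La : nk_le (nk_diag (fst a + 3 * B)) q') by (intro t; unfold q', nk_diag; lia).
  assert (Lb : nk_le (nk_diag (fst b + 3 * B)) q') by (intro t; unfold q', nk_diag; lia).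
  exists (sh m n q'). split; [|split].
  - intro t; specialize (La t); specialize (HBn t); unfold psi0, sh, nk_diag, nk_add, nk_sub in *; simpl; lia.
  - intro t; specialize (Lb t); specialize (HBn t); unfold psi0, sh, nk_diag, nk_add, nk_sub in *; simpl; lia.
  - rewrite !transfer; auto. apply (E_eq_ext y Hy a b q); auto.
Qed.

Lemma psi_lam b lam : wf y b -> src lam = rng (snd b) ->
  req x (psi0 x y m n B (lamp lam b)) (lamp lam (psi0 x y m n B b)).
Proof.
  intros Hw Hl.
  assert (Hw' : wf y (lamp lam b)) by (apply (wf_lam y); auto).
  assert (Hp : wf x (psi0 x y m n B b)) by (apply wf_psi; auto).
  assert (Hl' : src lam = rng (snd (psi0 x y m n B b))) by (rewrite psi_rng; auto).
  apply (req_E x Hx); try (apply wf_psi; auto); try (apply (wf_lam x); auto).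
  set (q := nk_diag (k:=k) (fst b + 3 * B)).
  assert (Lq : nk_le (nk_diag (fst b + 2 * B)) (sh m n q)).
  { intro t; specialize (HBn t); unfold q, sh, nk_diag, nk_add, nk_sub in *; lia. }
  exists (sh m n q). split; [exact Lq|split; [exact Lq|]].
  rewrite transfer; auto; [|apply nk_le_refl].
  rewrite (E_lam x Hx); auto.
  rewrite transfer; [|auto|apply nk_le_refl].
  apply (E_lam y Hy); auto. unfold q; apply le_diag; lia.
Qed.

End Transfer.

Lemma shift_sym {k} {L : kgraph k} (x y : ipath L) m n : shift_eq x y m n -> shift_eq y x n m.
Proof. intros H p q Hpq. symmetry; auto. Qed.

Lemma roundtrip {k} {L : kgraph k} (x y : ipath L) (Hx : is_inf_path x) (Hy : is_inf_path y)
  (m n : Nk k) (Hmn : shift_eq x y m n) (B : nat)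
  (HBm : nk_le m (nk_diag B)) (HBn : nk_le n (nk_diag B)) b :
  wf y b -> req y (psi0 y x n m B (psi0 x y m n B b)) b.
Proof.
  intro Hw.
  assert (Ha : wf x (psi0 x y m n B b)) by (apply wf_psi; auto).
  assert (Hb2 : wf y (psi0 y x n m B (psi0 x y m n B b))) by
    (apply wf_psi; auto; apply shift_sym; auto).
  apply (req_E y Hy); auto.
  set (q := nk_diag (k:=k) (fst b + 6 * B)).
  exists q. split; [|split].
  - unfold psi0; simpl; unfold q; apply le_diag; lia.
  - unfold q; apply le_diag; lia.
  - assert (E1 : sh n m (sh m n q) = q).
    { apply nk_ext; intro t; specialize (HBn t); unfold q, sh, nk_diag, nk_add, nk_sub in *; lia. }
    rewrite <- E1 at 1.
    rewrite (transfer y x Hy Hx n m (shift_sym _ _ _ _ Hmn) B HBn HBm); auto.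
    + apply (transfer x y Hx Hy m n Hmn B HBm HBn); auto. unfold q; apply le_diag; lia.
    + intro t; specialize (HBn t); specialize (HBm t); unfold psi0, q, sh, nk_diag, nk_add, nk_sub in *; simpl; lia.
Qed.

Section L2T.
Context {D1 D2 : Type} (E1 : D1 -> D1 -> Prop) (E2 : D2 -> D2 -> Prop)
  (p : D2 -> D1) (q : D1 -> D2)
  (Hp_resp : forall a b, E2 a b -> E1 (p a) (p b))
  (Hp_refl : forall a b, E1 (p a) (p b) -> E2 a b)
  (Hq_refl : forall a b, E2 (q a) (q b) -> E1 a b)
  (Hpq : forall a, E1 (p (q a)) a).

Lemma cd_map {X Y} (EX : X -> X -> Prop) (EY : Y -> Y -> Prop) (g : X -> Y)
  (Hg : forall a b, EY (g a) (g b) -> EX a b) l :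
  classes_distinct EX l -> classes_distinct EY (map g l).
Proof.
  induction l as [|a l IH]; simpl; auto.
  intros [H1 H2]; split; auto.
  intros b Hb Hab. apply in_map_iff in Hb. destruct Hb as [c [<- Hc]].
  apply (H1 c Hc). auto.
Qed.

Lemma l2_transfer f r : respects E1 f -> sqnorm_is E1 f r -> sqnorm_is E2 (fun d => f (p d)) r.
Proof.
  intros Hf [Hub Hl].
  assert (Heq : forall t, (exists l, classes_distinct E2 l /\ t = psum (fun d => f (p d)) l) <->
                          (exists l, classes_distinct E1 l /\ t = psum f l)).
  { intro t; split.
    - intros [l [Hd ->]]. exists (map p l). split.
      + apply (cd_map E2 E1 p Hp_refl); auto.
      + clear Hd; induction l; simpl; auto. rewrite IHl; reflexivity.
    - intros [l [Hd ->]]. exists (map q l). split.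
      + apply (cd_map E1 E2 q Hq_refl); auto.
      + clear Hd; induction l; simpl; auto. rewrite IHl, (Hf _ _ (Hpq a)); reflexivity. }
  split.
  - intros t Ht. apply Hub, Heq, Ht.
  - intros b Hb. apply Hl. intros t Ht. apply Hb, Heq, Ht.
Qed.

Lemma in_l2_transfer f : in_l2 E1 f -> in_l2 E2 (fun d => f (p d)).
Proof.
  intros [Hf [r Hr]]. split.
  - intros a b Hab. apply Hf, Hp_resp, Hab.
  - exists r. apply l2_transfer; auto.
Qed.
End L2T.

Theorem mainTheorem4 (k : nat) (L : kgraph k)
  (Hrf : row_finite L) (Hsf : source_free L) (Hsc : strongly_connected L)
  (x y : ipath L) (Hx : is_inf_path x) (Hy : is_inf_path y)
  (m n : Nk k) (Hmn : shift_eq x y m n) :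
  unitarily_equivalent x y.
Proof.
  destruct (fin_bound _ (fun i => m i + n i)) as [B HB].
  assert (HBm : nk_le m (nk_diag B)) by (intro t; specialize (HB t); unfold nk_diag; simpl in *; lia).
  assert (HBn : nk_le n (nk_diag B)) by (intro t; specialize (HB t); unfold nk_diag; simpl in *; lia).
  assert (Hnm := shift_sym _ _ _ _ Hmn).
  pose (psiB := fun d : Bx y => exist (fun p => src (snd p) = vtx x (fst p))
                  (psi0 x y m n B (proj1_sig d)) (wf_psi x y Hx Hy m n Hmn B HBm HBn _ (proj2_sig d)) : Bx x).
  pose (phiB := fun d : Bx x => exist (fun p => src (snd p) = vtx y (fst p))
                  (psi0 y x n m B (proj1_sig d)) (wf_psi y x Hy Hx n m Hnm B HBn HBm _ (proj2_sig d)) : Bx y).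
  assert (Rpsi : forall a b, Bx_eq a b -> Bx_eq (psiB a) (psiB b)).
  { intros [a Ha] [b Hb] H. apply (psi_resp x y Hx Hy m n Hmn B HBm HBn); auto. }
  assert (Rphi : forall a b, Bx_eq a b -> Bx_eq (phiB a) (phiB b)).
  { intros [a Ha] [b Hb] H. apply (psi_resp y x Hy Hx n m Hnm B HBn HBm); auto. }
  assert (RT1 : forall a, Bx_eq (phiB (psiB a)) a).
  { intros [a Ha]. apply (roundtrip x y Hx Hy m n Hmn B HBm HBn); auto. }
  assert (RT2 : forall a, Bx_eq (psiB (phiB a)) a).
  { intros [a Ha]. apply (roundtrip y x Hy Hx n m Hnm B HBn HBm); auto. }
  assert (Tx : forall a b c : Bx x, Bx_eq a b -> Bx_eq b c -> Bx_eq a c).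
  { intros [a Ha] [b Hb] [c Hc]. apply (req_trans x Hx); auto. }
  assert (Ty : forall a b c : Bx y, Bx_eq a b -> Bx_eq b c -> Bx_eq a c).
  { intros [a Ha] [b Hb] [c Hc]. apply (req_trans y Hy); auto. }
  assert (Sx : forall a b : Bx x, Bx_eq a b -> Bx_eq b a).
  { intros [a Ha] [b Hb]. apply (req_sym x). }
  assert (Sy : forall a b : Bx y, Bx_eq a b -> Bx_eq b a).
  { intros [a Ha] [b Hb]. apply (req_sym y). }
  assert (Fpsi : forall a b, Bx_eq (psiB a) (psiB b) -> Bx_eq a b).
  { intros a b H. apply Rphi in H. eapply Ty; [apply Sy, RT1|]. eapply Ty; [apply H|]. apply RT1. }
  assert (Fphi : forall a b, Bx_eq (phiB a) (phiB b) -> Bx_eq a b).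
  { intros a b H. apply Rpsi in H. eapply Tx; [apply Sx, RT2|]. eapply Tx; [apply H|]. apply RT2. }
  exists (fun f d => f (psiB d)).
  split; [|split; [|split; [|split]]].
  - intros f Hf. apply (in_l2_transfer (Bx_eq (x:=x)) (Bx_eq (x:=y)) psiB phiB); auto.
  - intros; reflexivity.
  - intros f r Hf Hr. apply (l2_transfer (Bx_eq (x:=x)) (Bx_eq (x:=y)) psiB phiB); auto. apply Hf.
  - intros g Hg. exists (fun d => g (phiB d)). split.
    + apply (in_l2_transfer (Bx_eq (x:=y)) (Bx_eq (x:=x)) phiB psiB); auto.
    + intro d. apply Hg. apply RT1.
  - intros lam f Hf d. destruct Hf as [Hf _].
    unfold pi_t.
    destruct (excluded_middle_informative (exists b, in_range lam (psiB d) b)) as [H1|H1];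
    destruct (excluded_middle_informative (exists b, in_range lam d b)) as [H2|H2].
    + destruct (constructive_indefinite_description _ H1) as [b0 [Hs0 Hr0]].
      destruct (constructive_indefinite_description _ H2) as [b1 [Hs1 Hr1]].
      apply Hf.
      destruct b0 as [b0 Hb0]; destruct b1 as [b1 Hb1]; destruct d as [d Hd].
      unfold Bx_eq; simpl in *.
      apply (req_cancel x Hx _ _ lam); auto.
      * apply (wf_psi x y Hx Hy m n Hmn B HBm HBn); auto.
      * rewrite (psi_rng x y Hx Hy m n Hmn B HBm HBn); auto.
      * apply (req_trans x Hx _ (psi0 x y m n B d)).
        -- apply (wf_lam x); auto.
        -- apply (wf_psi x y Hx Hy m n Hmn B HBm HBn); auto.
        -- apply (wf_lam x); auto.
           apply (wf_psi x y Hx Hy m n Hmn B HBm HBn); auto.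
           rewrite (psi_rng x y Hx Hy m n Hmn B HBm HBn); auto.
        -- apply (req_sym x); exact Hr0.
        -- apply (req_trans x Hx _ (psi0 x y m n B (lamp lam b1))).
           ++ apply (wf_psi x y Hx Hy m n Hmn B HBm HBn); auto.
           ++ apply (wf_psi x y Hx Hy m n Hmn B HBm HBn); auto. apply (wf_lam y); auto.
           ++ apply (wf_lam x); auto.
              apply (wf_psi x y Hx Hy m n Hmn B HBm HBn); auto.
              rewrite (psi_rng x y Hx Hy m n Hmn B HBm HBn); auto.
           ++ apply (psi_resp x y Hx Hy m n Hmn B HBm HBn); auto. apply (wf_lam y); auto.
           ++ apply (psi_lam x y Hx Hy m n Hmn B HBm HBn); auto.
    + exfalso. apply H2. destruct H1 as [[b0 Hb0] [Hs0 Hr0]].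
      destruct d as [d Hd]. simpl in *.
      exists (phiB (exist _ b0 Hb0)). split; unfold phiB, proj1_sig.
      * rewrite (psi_rng y x Hy Hx n m Hnm B HBn HBm); auto.
      * apply (req_trans y Hy _ (psi0 y x n m B (psi0 x y m n B d))); auto.
        -- apply (wf_psi y x Hy Hx n m Hnm B HBn HBm); auto.
           apply (wf_psi x y Hx Hy m n Hmn B HBm HBn); auto.
        -- apply (wf_lam y); auto.
           apply (wf_psi y x Hy Hx n m Hnm B HBn HBm); auto.
           rewrite (psi_rng y x Hy Hx n m Hnm B HBn HBm); auto.
        -- apply (req_sym y). apply (roundtrip x y Hx Hy m n Hmn B HBm HBn); auto.
        -- apply (req_trans y Hy _ (psi0 y x n m B (lamp lam b0))).
           ++ apply (wf_psi y x Hy Hx n m Hnm B HBn HBm); auto.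
              apply (wf_psi x y Hx Hy m n Hmn B HBm HBn); auto.
           ++ apply (wf_psi y x Hy Hx n m Hnm B HBn HBm); auto. apply (wf_lam x); auto.
           ++ apply (wf_lam y); auto.
              apply (wf_psi y x Hy Hx n m Hnm B HBn HBm); auto.
              rewrite (psi_rng y x Hy Hx n m Hnm B HBn HBm); auto.
           ++ apply (psi_resp y x Hy Hx n m Hnm B HBn HBm); auto.
              apply (wf_psi x y Hx Hy m n Hmn B HBm HBn); auto.
              apply (wf_lam x); auto.
           ++ apply (psi_lam y x Hy Hx n m Hnm B HBn HBm); auto.
    + exfalso. apply H1. destruct H2 as [[b1 Hb1] [Hs1 Hr1]].
      destruct d as [d Hd]. simpl in *.
      exists (psiB (exist _ b1 Hb1)). split; unfold psiB, proj1_sig.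
      * rewrite (psi_rng x y Hx Hy m n Hmn B HBm HBn); auto.
      * apply (req_trans x Hx _ (psi0 x y m n B (lamp lam b1))).
        -- apply (wf_psi x y Hx Hy m n Hmn B HBm HBn); auto.
        -- apply (wf_psi x y Hx Hy m n Hmn B HBm HBn); auto. apply (wf_lam y); auto.
        -- apply (wf_lam x); auto.
           apply (wf_psi x y Hx Hy m n Hmn B HBm HBn); auto.
           rewrite (psi_rng x y Hx Hy m n Hmn B HBm HBn); auto.
        -- apply (psi_resp x y Hx Hy m n Hmn B HBm HBn); auto. apply (wf_lam y); auto.
        -- apply (psi_lam x y Hx Hy m n Hmn B HBm HBn); auto.
    + reflexivity.
Qed.
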